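(* There exist fair division instances with divisible goods, additive valuations and generalized assignment constraints in which the set of FEF allocations is not convex.
   Context: There are $n$ agents and $m$ divisible goods. An allocation is $x=(x_1,\dots,x_n)$ with $x_i\in[0,1]^m$ and $\sum_i x_{i,g}\le 1$ for each good $g$; the charity receives $x_{\mathrm{charity},g}=1-\sum_i x_{i,g}$. Valuations are additive: $v_i(y)=\sum_g y_g v_{i,g}$ with $v_{i,g}\ge0$. Generalized assignment constraints: each agent $i$ has sizes $s_i(g)\ge 0$ and a budget $B_i\ge0$, and a bundle $y\in[0,1]^m$ is feasible for $i$ iff $\sum_g s_i(g)y_g\le B_i$; an allocation is feasible if each $x_i$ is feasible for $i$. A feasible allocation is FEF if for all agents $i,j$, every $y\le x_j$ (componentwise) feasible for $i$ satisfies $v_i(x_i)\ge v_i(y)$, and likewise every $y\le x_{\mathrm{charity}}$ feasible for $i$ satisfies $v_i(x_i)\ge v_i(y)$. *)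

(* Defs.v *)
From mathcomp Require Import all_boot all_order all_algebra.
From mathcomp Require Import reals.
Set Implicit Arguments. Unset Strict Implicit. Unset Printing Implicit Defensive.
Import Order.TTheory GRing.Theory Num.Theory.
Local Open Scope ring_scope.

Section FEF.
Variables (R : realFieldType) (n m : nat).

Definition bundle := 'I_m -> R.
Definition allocation := 'I_n -> bundle.

Definition in_unit_cube (y : bundle) : Prop := forall g, 0 <= y g <= 1.

Definition is_allocation (x : allocation) : Prop :=
  (forall i, in_unit_cube (x i)) /\ (forall g, \sum_(i < n) x i g <= 1).

Definition charity (x : allocation) : bundle := fun g => 1 - \sum_(i < n) x i g.

Definition value (v : 'I_n -> 'I_m -> R) (i : 'I_n) (y : bundle) : R :=
  \sum_(g < m) y g * v i g.

Definition feasible_for (s : 'I_n -> 'I_m -> R) (B : 'I_n -> R) (i : 'I_n)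
  (y : bundle) : Prop :=
  in_unit_cube y /\ \sum_(g < m) s i g * y g <= B i.

Definition feasible_allocation s B (x : allocation) : Prop :=
  is_allocation x /\ forall i, feasible_for s B i (x i).

Definition bundle_le (y z : bundle) : Prop := forall g, y g <= z g.

Definition FEF v s B (x : allocation) : Prop :=
  feasible_allocation s B x /\
  forall i : 'I_n,
    (forall (j : 'I_n) (y : bundle), in_unit_cube y -> bundle_le y (x j) ->
        feasible_for s B i y -> value v i y <= value v i (x i)) /\
    (forall y : bundle, in_unit_cube y -> bundle_le y (charity x) ->
        feasible_for s B i y -> value v i y <= value v i (x i)).

Definition convex_comb (t : R) (x y : allocation) : allocation :=
  fun i g => t * x i g + (1 - t) * y i g.

Definition convex_alloc_set (S : allocation -> Prop) : Prop :=
  forall (x y : allocation) (t : R), S x -> S y -> 0 <= t <= 1 ->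
    S (convex_comb t x y).

End FEF.

(* Main.v *)
Require Import Defs.
From mathcomp Require Import all_boot all_order all_algebra.
From mathcomp Require Import reals.
From mathcomp Require Import lra.
Import Order.TTheory GRing.Theory Num.Theory.
Local Open Scope ring_scope.

Lemma sum2 (R : realType) (F : 'I_2 -> R) :
  \sum_(g < 2) F g = F (@Ordinal 2 0 isT) + F (@Ordinal 2 1 isT).
Proof.
rewrite big_ord_recr big_ord_recr big_ord0 /= add0r.
congr (F _ + F _); exact: val_inj.
Qed.

Lemma ord2E (P : 'I_2 -> Prop) :
  P (@Ordinal 2 0 isT) -> P (@Ordinal 2 1 isT) -> forall i, P i.
Proof.
move=> H0 H1 [[|[|k]] Hk].
- by rewrite (bool_irrelevance Hk isT).
- by rewrite (bool_irrelevance Hk isT).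
- by [].
Qed.

Section Ex.
Variable R : realType.
Definition v0 := fun (i g : 'I_2) => if (i : nat) == 0%N then 1 else 0 : R.
Definition s0 := fun (i g : 'I_2) =>
  if ((i : nat) == 0%N) && ((g : nat) == 0%N) then 2 else 0 : R.
Definition B0 := fun (i : 'I_2) => if (i : nat) == 0%N then 1 else 0 : R.
Definition x0 := fun (i g : 'I_2) =>
  if (i : nat) == 0%N then (if (g : nat) == 0%N then 0 else 1/2)
  else (if (g : nat) == 0%N then 0 else 1/2) : R.
Definition y0 := fun (i g : 'I_2) =>
  if (i : nat) == 0%N then (if (g : nat) == 0%N then 0 else 1/2)
  else (if (g : nat) == 0%N then 1 else 0) : R.

Ltac crunch :=
  let Hc := fresh in let Hl := fresh in let Hf := fresh in
  let yb := fresh in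
  move=> yb Hc Hl [_ Hf];
  have /andP[? ?] := Hc (@Ordinal 2 0 isT); have /andP[? ?] := Hc (@Ordinal 2 1 isT);
  have := Hl (@Ordinal 2 0 isT); have := Hl (@Ordinal 2 1 isT);
  move: Hf; rewrite /value /charity /v0 /s0 /B0 /x0 /y0 !sum2 /=; lra.

Ltac fef_tac :=
  split; [split; [split; [apply: ord2E; apply: ord2E; rewrite /x0 /y0 /=; apply/andP; split; lra
                         | apply: ord2E; rewrite sum2 /x0 /y0 /=; lra]
                 | apply: ord2E; (split; [apply: ord2E; rewrite /x0 /y0 /=; apply/andP; split; lra
                                         | rewrite sum2 /x0 /y0 /s0 /B0 /=; lra])]
         | apply: ord2E; (split; [apply: ord2E; crunch | crunch])].

Lemma Hx0 : FEF v0 s0 B0 x0.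
Proof. fef_tac. Qed.

Lemma Hy0 : FEF v0 s0 B0 y0.
Proof. fef_tac. Qed.
End Ex.

Theorem theorem2 (R : realType) :
  exists (n m : nat) (v s : 'I_n -> 'I_m -> R) (B : 'I_n -> R),
    (forall i g, 0 <= v i g) /\ (forall i g, 0 <= s i g) /\ (forall i, 0 <= B i) /\
    ~ convex_alloc_set (FEF v s B).
Proof.
exists 2%N, 2%N, (@v0 R), (@s0 R), (@B0 R).
split; first by move=> i g; rewrite /v0; case: ifP.
split; first by move=> i g; rewrite /s0; case: ifP.
split; first by move=> i; rewrite /B0; case: ifP.
move=> H.
have Ht : (0 <= (1/2 : R)) && ((1/2 : R) <= 1) by apply/andP; split; lra.
have [_ Hall] := H _ _ (1/2) (@Hx0 R) (@Hy0 R) Ht.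
have [Henv _] := Hall (@Ordinal 2 0 isT).
have Hc := Henv (@Ordinal 2 1 isT) (convex_comb (1/2) (@x0 R) (@y0 R) (@Ordinal 2 1 isT)).
have : value (@v0 R) (@Ordinal 2 0 isT) (convex_comb (1/2) (@x0 R) (@y0 R) (@Ordinal 2 1 isT))
   <= value (@v0 R) (@Ordinal 2 0 isT) (convex_comb (1/2) (@x0 R) (@y0 R) (@Ordinal 2 0 isT)).
  apply: Hc.
  - apply: ord2E; rewrite /convex_comb /x0 /y0 /=; apply/andP; split; lra.
  - by move=> g; exact: lexx.
  - split; first by apply: ord2E; rewrite /convex_comb /x0 /y0 /=; apply/andP; split; lra.
    rewrite sum2 /s0 /B0 /convex_comb /x0 /y0 /=; lra.
rewrite /value !sum2 /convex_comb /x0 /y0 /v0 /=.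
move=> Hle; clear -Hle; lra.
Qed.
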